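(* Let $X$ be a compact nonpositively curved cube complex and $(\tilde Y,\phi)$ a quasiline in $\tilde X$. Then there exist constants $N,M$, depending only on $(\tilde Y,\phi)$, such that for every integer $k>0$: (1) $\operatorname{diam}\big(H^+\cap\phi^{\pm k}(H^-)\big)\le kN$ for every essential hyperplane $H$ of $\tilde Y$ with halfspaces $H^+,H^-$; (2) if an essential hyperplane $H$ of $\tilde Y$ crosses a combinatorial geodesic $\gamma$ in $\tilde Y$ at an edge $e_0$, and $e_0$ has distance $\ge kM$ from both endpoints of $\gamma$, then $\phi^{k}(H)$ and $\phi^{-k}(H)$ cross $\gamma$. Moreover, any constants $\overline M\ge M$, $\overline N\ge N$ also satisfy (2) and (1) respectively.
   Context: $\tilde X$ is the universal cover of $X$. A quasiline in $\tilde X$ is a pair $(\tilde Y,\phi)$ with $\tilde Y\subset\tilde X$ a convex subcomplex and $\phi\in\pi_1X$ nontrivial such that $\langle\phi\rangle$ acts cocompactly on $\tilde Y$. Hyperplanes of $\tilde Y$ and their halfspaces $H^\pm$ (components of $\tilde Y$ minus the open carrier of $H$) are taken in the CAT(0) cube complex $\tilde Y$. A halfspace is deep if it contains points arbitrarily far from $H$; $H$ is essential if both halfspaces are deep. *)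

(* Defs.v *)
From Stdlib Require List Relations.
From mathcomp Require Import all_boot.
Set Implicit Arguments.
Unset Strict Implicit.
Unset Printing Implicit Defensive.

(* A cube complex is encoded by its 1-skeleton: a simple graph on vertices V
   with adjacency [adj].  CAT(0) cube complexes are exactly (cube completions
   of) median graphs; all notions below are combinatorial. *)

Section Graph.
Variables (V : Type) (adj : V -> V -> Prop).

Inductive walk (P : V -> Prop) : V -> V -> nat -> Prop :=
| walk0 x : P x -> walk P x x 0
| walkS x y z n : P x -> adj x y -> walk P y z n -> walk P x z n.+1.

Definition dle (P : V -> Prop) x y n := exists m, m <= n /\ walk P x y m.

Definition dist (P : V -> Prop) x y n :=
  walk P x y n /\ forall m, walk P x y m -> n <= m.

Definition allV : V -> Prop := fun _ => True.

Definition geodesic (P : V -> Prop) (gamma : nat -> V) (n : nat) :=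
  (forall i, i <= n -> P (gamma i)) /\
  (forall i, i < n -> adj (gamma i) (gamma i.+1)) /\
  dist P (gamma 0) (gamma n) n.

Definition in_interval x y m :=
  exists a b, dist allV x m a /\ dist allV m y b /\ dist allV x y (a + b).

Definition median_graph :=
  (forall x y, adj x y -> adj y x) /\
  (forall x, ~ adj x x) /\
  (forall x y, exists n, walk allV x y n) /\
  (forall x y z, exists m, in_interval x y m /\ in_interval y z m /\
      in_interval x z m /\
      forall m', in_interval x y m' -> in_interval y z m' ->
                 in_interval x z m' -> m' = m).

(* combinatorially convex vertex set (= vertex set of a convex subcomplex) *)
Definition convex (Y : V -> Prop) :=
  forall gamma n, geodesic allV gamma n -> Y (gamma 0) -> Y (gamma n) ->
    forall i, i <= n -> Y (gamma i).

Definition is_cube (Q : V -> Prop) :=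
  exists (d : nat) (c : {ffun 'I_d -> bool} -> V),
    injective c /\ (forall x, Q x <-> exists u, c u = x) /\
    (forall u w, adj (c u) (c w) <-> #|[pred i | u i != w i]| = 1).

Definition automorphism (g : V -> V) :=
  (exists h, cancel g h /\ cancel h g) /\ (forall x y, adj x y <-> adj (g x) (g y)).

Definition locally_finite :=
  forall v, exists l : list V, forall w, adj v w -> List.In w l.

(* (adj, G) is the universal cover tilde X of a compact nonpositively curved
   cube complex X, with G = pi_1 X acting by deck transformations:
   tilde X is CAT(0) (median 1-skeleton), G is a group of cubical
   automorphisms acting freely (no nontrivial element stabilises a cube,
   i.e. no fixed points in the realisation) and cocompactly (locally finite,
   finitely many vertex orbits). *)
Definition compact_npc_cover (G : (V -> V) -> Prop) :=
  median_graph /\ locally_finite /\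
  (forall g, G g -> automorphism g) /\
  G id /\
  (forall g h, G g -> G h -> G (g \o h)) /\
  (forall g, G g -> exists h, G h /\ cancel g h /\ cancel h g) /\
  (forall g Q, G g -> is_cube Q -> (forall x, Q x -> Q (g x)) -> forall x, g x = x) /\
  (exists F : list V, forall v, exists g z, G g /\ List.In z F /\ v = g z).

Definition quasiline (G : (V -> V) -> Prop) (Y : V -> Prop) (phi psi : V -> V) :=
  (exists y, Y y) /\ convex Y /\
  G phi /\ cancel phi psi /\ cancel psi phi /\
  (exists v, phi v <> v) /\
  (forall x, Y x <-> Y (phi x)) /\
  (exists F : list V, (forall z, List.In z F -> Y z) /\
     forall y, Y y -> exists z k, List.In z F /\
        (y = iter k phi z \/ y = iter k psi z)).

(* Hyperplanes of the CAT(0) cube complex tilde Y (induced subgraph on Y):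
   classes of (oriented) edges of Y generated by opposite sides of squares
   of Y and by edge reversal. *)
Definition edgeY (Y : V -> Prop) (e : V * V) := [/\ Y e.1, Y e.2 & adj e.1 e.2].

Inductive elem_par (Y : V -> Prop) : V * V -> V * V -> Prop :=
| par_sq a b c d : Y a -> Y b -> Y c -> Y d -> adj a b -> adj c d ->
    adj a c -> adj b d -> a <> d -> b <> c -> elem_par Y (a, b) (c, d)
| par_flip a b : edgeY Y (a, b) -> elem_par Y (a, b) (b, a).

(* f is dual to the hyperplane H(e) of tilde Y dual to the edge e of Y *)
Definition dual (Y : V -> Prop) (e f : V * V) :=
  edgeY Y e /\ Relation_Operators.clos_refl_sym_trans _ (elem_par Y) e f.

(* walks in Y not using edges dual to H(e): 1-skeleton of tilde Y minus the
   open carrier of H(e) *)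
Inductive walk_avoid (Y : V -> Prop) (e : V * V) : V -> V -> Prop :=
| wa0 x : Y x -> walk_avoid Y e x x
| waS x y z : Y x -> adj x y -> ~ dual Y e (x, y) -> walk_avoid Y e y z ->
    walk_avoid Y e x z.

(* halfspace of H(a,b) containing the vertex s (s = a or s = b): vertices of
   the component of tilde Y - open carrier of H containing s *)
Definition halfspace (Y : V -> Prop) (a b s : V) (x : V) := walk_avoid Y (a, b) s x.

(* the halfspace of H(a,b) containing s is deep: contains vertices arbitrarily
   far (in tilde Y) from H, i.e. from the carrier of H *)
Definition deep (Y : V -> Prop) (a b s : V) :=
  forall r, exists x, halfspace Y a b s x /\
    forall f, dual Y (a, b) f -> ~ dle Y x f.1 r /\ ~ dle Y x f.2 r.

Definition essential (Y : V -> Prop) (a b : V) := deep Y a b a /\ deep Y a b b.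

Definition diam_le (Y : V -> Prop) (S : V -> Prop) (D : nat) :=
  forall x y, S x -> S y -> dle Y x y D.

Definition crosses (Y : V -> Prop) (e : V * V) (gamma : nat -> V) (n : nat) :=
  exists j, j < n /\ dual Y e (gamma j, gamma j.+1).

End Graph.

(* Main.v *)
From Stdlib Require Import ZArith Lia Classical ClassicalEpsilon Relations List.
Require Import Defs.
From mathcomp Require Import all_boot zify.
Set Implicit Arguments. Unset Strict Implicit. Unset Printing Implicit Defensive.

Section Dist.
Variables (V : Type) (adj : V -> V -> Prop).
Hypothesis Hmed : median_graph adj.

Lemma adj_sym x y : adj x y -> adj y x.
Proof. by case: Hmed => H _; apply: H. Qed.
Lemma adj_irr x : ~ adj x x.
Proof. by case: Hmed => _ [H _]; apply: H. Qed.

Lemma walk_ends P x y n : walk adj P x y n -> P x /\ P y.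
Proof. by elim=> //= x0 y0 z n0 Px _ _ [_ Pz]. Qed.

Lemma walk_app P x y z n m : walk adj P x y n -> walk adj P y z m -> walk adj P x z (n + m).
Proof.
elim=> [x0 _|x0 y0 z0 n0 Px Ha _ IH] Hw //.
rewrite addSn; econstructor; eauto.
Qed.

Lemma walk_mono (P Q : V -> Prop) x y n : (forall v, P v -> Q v) -> walk adj P x y n -> walk adj Q x y n.
Proof. move=> H; elim=> [x0 Px|x0 y0 z0 n0 Px Ha _ IH]; econstructor; eauto. Qed.

Lemma walk1 P x y : P x -> P y -> adj x y -> walk adj P x y 1.
Proof. move=> Px Py A; econstructor; eauto; constructor; auto. Qed.

Lemma walk_rev P x y n : walk adj P x y n -> walk adj P y x n.
Proof.
elim=> [x0 Px|x0 y0 z0 n0 Px Ha Hw IH]; first by constructor.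
rewrite -addn1; apply: walk_app IH _; apply: walk1 => //.
  by case: (walk_ends Hw).
by apply: adj_sym.
Qed.

Lemma walk0_eq P x y : walk adj P x y 0 -> x = y.
Proof. by move=> H; inversion H. Qed.

Lemma walkS_inv P x y n : walk adj P x y n.+1 -> exists x', adj x x' /\ P x /\ walk adj P x' y n.
Proof. move=> H; inversion H; subst; eauto. Qed.

Lemma conn x y : exists n, walk adj (@allV V) x y n.
Proof. by case: Hmed => _ [_ [H _]]; apply: H. Qed.

Lemma min_walk P x y n : walk adj P x y n -> exists m, dist adj P x y m.
Proof.
move=> Hn.
apply: NNPP => Hno.
have key : forall k m, m <= k -> ~ walk adj P x y m.
  elim=> [|k IH] m Hm Hw.
    apply: Hno; exists m; split => // m' _; lia.
  apply: Hno; exists m; split => // m' Hw'.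
  case: (leqP m m') => // Hlt.
  exfalso; apply: (IH m') => //; lia.
by apply: (key n n).
Qed.

Definition d (x y : V) : nat := epsilon (inhabits 0) (fun n => dist adj (@allV V) x y n).

Lemma d_spec x y : dist adj (@allV V) x y (d x y).
Proof.
rewrite /d; apply: epsilon_spec.
case: (conn x y) => n Hn; exact: min_walk Hn.
Qed.

Lemma d_walk x y : walk adj (@allV V) x y (d x y).
Proof. by case: (d_spec x y). Qed.

Lemma d_le x y n : walk adj (@allV V) x y n -> d x y <= n.
Proof. by case: (d_spec x y) => _ H; apply: H. Qed.

Lemma dist_d x y n : dist adj (@allV V) x y n -> n = d x y.
Proof.
case=> Hw Hm; case: (d_spec x y) => Hw' Hm'.
have := Hm _ Hw'; have := Hm' _ Hw; lia.
Qed.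

Lemma d_refl x : d x x = 0.
Proof. have := d_le (walk0 adj (P:=(@allV V)) (x:=x) I); lia. Qed.

Lemma d_eq0 x y : d x y = 0 -> x = y.
Proof. move=> H; have := d_walk x y; rewrite H; exact: walk0_eq. Qed.

Lemma d_sym x y : d x y = d y x.
Proof.
have h1 := d_le (walk_rev (d_walk x y)).
have h2 := d_le (walk_rev (d_walk y x)); lia.
Qed.

Lemma d_tri x y z : d x z <= d x y + d y z.
Proof. apply: d_le; apply: walk_app; apply: d_walk. Qed.

Lemma d_adj x y : adj x y -> d x y = 1.
Proof.
move=> A; have h := d_le (walk1 (P:=(@allV V)) I I A).
case E: (d x y) => [|n]; last by lia.
by move/d_eq0: E => E; subst; case: (adj_irr A).
Qed.

Lemma d_one x y : d x y = 1 -> adj x y.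
Proof.
move=> E; have := d_walk x y; rewrite E => /walkS_inv [x' [A [_ W]]].
by move/walk0_eq: W => <-.
Qed.

Lemma d_step x y n : d x y = n.+1 -> exists x', adj x x' /\ d x' y = n.
Proof.
move=> E; have := d_walk x y; rewrite E => /walkS_inv [x' [A [_ W]]].
exists x'; split => //.
have h1 := d_le W; have h2 := d_tri x x' y; rewrite (d_adj A) in h2; lia.
Qed.

Lemma d_adj_lip x y z : adj x y -> d x z <= (d y z).+1 /\ d y z <= (d x z).+1.
Proof.
move=> A; have h1 := d_tri x y z; have h2 := d_tri y x z.
rewrite (d_adj A) in h1; rewrite (d_adj (adj_sym A)) in h2; lia.
Qed.

Definition Ival x y m := d x m + d m y = d x y.

Lemma in_interval_Ival x y m : in_interval adj x y m <-> Ival x y m.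
Proof.
split.
  case=> [a [b [H1 [H2 H3]]]]; rewrite /Ival.
  by rewrite -(dist_d H1) -(dist_d H2) -(dist_d H3).
move=> H; exists (d x m), (d m y); split; [exact: d_spec|split; [exact: d_spec|]].
by rewrite H; exact: d_spec.
Qed.

Lemma med_ex x y z : exists m, Ival x y m /\ Ival y z m /\ Ival x z m.
Proof.
case: Hmed => _ [_ [_ H]]; case: (H x y z) => m [h1 [h2 [h3 _]]].
by exists m; rewrite -!in_interval_Ival.
Qed.

Lemma med_uniq x y z m m' : Ival x y m -> Ival y z m -> Ival x z m ->
  Ival x y m' -> Ival y z m' -> Ival x z m' -> m = m'.
Proof.
case: Hmed => _ [_ [_ H]]; case: (H x y z) => m0 [h1 [h2 [h3 U]]].
move=> a1 a2 a3 b1 b2 b3.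
rewrite -!in_interval_Ival in a1 a2 a3 b1 b2 b3.
by rewrite (U _ a1 a2 a3) (U _ b1 b2 b3).
Qed.


Ltac ds u v := let h := fresh "ds" in have h := d_sym u v.
Ltac dt u v w := let h := fresh "dt" in have h := d_tri u v w.

Lemma Ival_edge a b m : adj a b -> Ival a b m -> m = a \/ m = b.
Proof.
move=> A; rewrite /Ival (d_adj A) => H.
case E: (d a m) => [|k].
  by left; rewrite (d_eq0 E).
right; rewrite E in H; apply: d_eq0; lia.
Qed.

Lemma W_or a b x : adj a b -> d x b = (d x a).+1 \/ d x a = (d x b).+1.
Proof.
move=> A; case: (med_ex x a b) => m [h1 [h2 h3]].
case: (Ival_edge A h2) => E; subst m.
  by left; move: h3; rewrite /Ival (d_adj A); lia.
by right; move: h1; rewrite /Ival (d_adj (adj_sym A)); lia.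
Qed.

Definition W a b x := d x a < d x b.

Lemma W_part a b x : adj a b -> W a b x \/ W b a x.
Proof. by move=> A; rewrite /W; case: (W_or x A); lia. Qed.

Lemma W_succ a b x : adj a b -> W a b x -> d x b = (d x a).+1.
Proof. by move=> A; rewrite /W; case: (W_or x A); lia. Qed.

Lemma W_aab a b : adj a b -> W a b a.
Proof. by move=> A; rewrite /W d_refl (d_adj A). Qed.

Definition Cut a b u v := (W a b u /\ W b a v) \/ (W b a u /\ W a b v).

Lemma cut_arith a b p q : adj a b -> adj p q -> W a b p -> W b a q ->
  d q a = (d p a).+1 /\ d q b = d p a.
Proof.
move=> A P Wp Wq.
have h1 := W_succ A Wp; have h2 := W_succ (adj_sym A) Wq.
have [h3 h4] := d_adj_lip a P; have [h5 h6] := d_adj_lip b P.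
ds p a; ds q a; ds p b; ds q b; lia.
Qed.

Lemma not_adj_same a b x y : adj a b -> d x a = d y a -> ~ adj x y.
Proof.
move=> A E Axy.
case: (W_or a Axy); ds a x; ds a y; lia.
Qed.

Lemma two_nbr a b x y1 y2 : adj a b -> W a b x -> W b a y1 -> W b a y2 ->
  adj x y1 -> adj x y2 -> y1 <> y2 -> False.
Proof.
move=> A Wx W1 W2 A1 A2 N.
have [e1 e2] := cut_arith A A1 Wx W1.
have [e3 e4] := cut_arith A A2 Wx W2.
have gx := W_succ A Wx.
have d12 : d y1 y2 = 2.
  have := d_tri y1 x y2; rewrite (d_adj (adj_sym A1)) (d_adj A2) => h.
  case E: (d y1 y2) => [|[|k]].
  - by case: N; apply: d_eq0.
  - by case: (not_adj_same A (_ : d y1 a = d y2 a) (d_one E)); lia.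
  - lia.
case: (med_ex y1 y2 b) => w [i1 [i2 i3]].
move: i1 i2 i3; rewrite /Ival d12 => i1 i2 i3.
have w1 : d y1 w = 1 by ds y2 w; ds w b; ds y1 b; ds y2 b; lia.
have w2 : d w y2 = 1 by lia.
have Aw1 := d_one w1.
have [l1 l2] := d_adj_lip a Aw1.
have fw : d w a = (d w b).+1 by case: (W_or w A); ds w b; lia.
have U := @med_uniq y1 y2 a x w.
have x1 := d_adj (adj_sym A1); have x2 := d_adj A2.
have E: x = w.
  apply: U; rewrite /Ival; ds y1 x; ds x y2; ds y2 x; ds y2 w; ds w y2; ds y1 w; ds y2 a; ds y1 a; ds y2 b; ds w b; ds y1 b; lia.
subst w; lia.
Qed.

Lemma sq_cut1 a b p q r s : adj a b -> adj p q -> adj r s -> adj p r -> adj q s ->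
  p <> s -> q <> r -> W a b p -> W b a q -> W a b r /\ W b a s.
Proof.
move=> A Apq Ars Apr Aqs Nps Nqr Wp Wq; split.
  case: (W_part r A) => // Wr; exfalso.
  by apply: (two_nbr A Wp Wq Wr Apq Apr Nqr).
case: (W_part s A) => // Ws; exfalso.
by apply: (two_nbr (adj_sym A) Wq Wp Ws (adj_sym Apq) Aqs Nps).
Qed.

Lemma sq_cut a b p q r s : adj a b -> adj p q -> adj r s -> adj p r -> adj q s ->
  p <> s -> q <> r -> Cut a b p q -> Cut a b r s.
Proof.
move=> A Apq Ars Apr Aqs Nps Nqr [[Wp Wq]|[Wp Wq]].
  by left; apply: (sq_cut1 A Apq Ars Apr Aqs Nps Nqr Wp Wq).
by right; apply: (sq_cut1 (adj_sym A) Apq Ars Apr Aqs Nps Nqr Wp Wq).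
Qed.

Lemma Cut_sym a b u v : Cut a b u v <-> Cut a b v u.
Proof. rewrite /Cut; tauto. Qed.

Lemma elem_par_edges (Y : V -> Prop) f g : elem_par adj Y f g -> edgeY adj Y f /\ edgeY adj Y g.
Proof.
case=> [a b c e Ya Yb Yc Ye Aab Ace Aac Abe _ _|a b [Ya Yb Aab]]; split; split => //.
by apply: adj_sym.
Qed.

Lemma dual_cut (Y : V -> Prop) a b u v : dual adj Y (a, b) (u, v) -> Cut a b u v.
Proof.
case=> [[/= Ya Yb A] R].
have key : forall f g, clos_refl_sym_trans _ (elem_par adj Y) f g ->
   (Cut a b f.1 f.2 <-> Cut a b g.1 g.2).
  move=> f g; elim => //=.
  - move=> f0 g0; case => /=.
      move=> p q r s _ _ _ _ Apq Ars Apr Aqs Nps Nqr; split.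
        exact: sq_cut.
      apply: sq_cut => //; try (apply: adj_sym; done); by auto.
    move=> p q _; exact: Cut_sym.
  - by move=> x y _ ->.
  - by move=> x y z _ -> _ ->.
apply/(key _ _ R) => /=; left; split; first exact: W_aab.
exact: (W_aab (adj_sym A)).
Qed.

Lemma dual_edge (Y : V -> Prop) e f : dual adj Y e f -> edgeY adj Y f.
Proof.
case=> He R.
have key : forall f g, clos_refl_sym_trans _ (elem_par adj Y) f g ->
   (edgeY adj Y f <-> edgeY adj Y g).
  move=> f0 g0; elim => //=.
  - by move=> x y /elem_par_edges [].
  - by move=> x y _ ->.
  - by move=> x y z _ -> _ ->.
by apply/(key _ _ R).
Qed.

Lemma dual_flip (Y : V -> Prop) e u v : dual adj Y e (u, v) -> dual adj Y e (v, u).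
Proof.
move=> Hd; have He := dual_edge Hd; case: Hd => H1 R; split => //.
apply: rst_trans R _; apply: rst_step; exact: par_flip.
Qed.

Lemma geo_build n : forall x y, d x y = n -> exists g : nat -> V,
  g 0 = x /\ g n = y /\ forall i, i < n -> adj (g i) (g i.+1).
Proof.
elim: n => [|n IH] x y E.
  by exists (fun _ => x); rewrite (d_eq0 E).
case: (d_step E) => x' [A E'].
case: (IH _ _ E') => g [g0 [gn ga]].
exists (fun i => if i is j.+1 then g j else x); split => //; split => //.
case=> [|i] Hi /=; first by rewrite g0.
apply: ga; lia.
Qed.

Lemma Ival_Y (Y : V -> Prop) x y w : convex adj Y -> Y x -> Y y -> Ival x y w -> Y w.
Proof.
move=> CY Yx Yy I.
case: (geo_build (erefl (d x w))) => g1 [a0 [an aa]].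
case: (geo_build (erefl (d w y))) => g2 [b0 [bn ba]].
set n1 := d x w; set n2 := d w y.
pose g i := if i <= n1 then g1 i else g2 (i - n1).
have Hg : geodesic adj (@allV V) g (n1 + n2).
  split; first by [].
  split.
    move=> i Hi; rewrite /g.
    case: (ltngtP i n1) => H.
    - have h1 : i <= n1 by lia. have h2 : i.+1 <= n1 by lia.
      by apply: aa.
    - have h1 : (i <= n1) = false by lia. have h2 : (i.+1 <= n1) = false by lia.
      rewrite ?h1 ?h2.
      have -> : i.+1 - n1 = (i - n1).+1 by lia.
      apply: ba; lia.
    - subst i; have h2 : (n1.+1 <= n1) = false by lia.
      rewrite ?leqnn ?h2 ?ltnn an -b0 subSnn; apply: ba; lia.
  have -> : g 0 = x by rewrite /g leq0n.
  have -> : g (n1 + n2) = y.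
    rewrite /g; case: (posnP n2) => H.
      rewrite H addn0 leqnn an; exact: d_eq0.
    have h2 : (n1 + n2 <= n1) = false by lia.
    by rewrite h2 addKn bn.
  have -> : n1 + n2 = d x y by [].
  exact: d_spec.
have := CY g (n1 + n2) Hg.
rewrite {1}/g leq0n a0 => /(_ Yx).
have -> : g (n1 + n2) = y.
  rewrite /g; case: (posnP n2) => H.
    rewrite H addn0 leqnn an; exact: d_eq0.
  have h2 : (n1 + n2 <= n1) = false by lia.
  by rewrite h2 addKn bn.
move=> /(_ Yy n1 (leq_addr _ _)).
by rewrite /g leqnn an.
Qed.

Lemma walkY (Y : V -> Prop) n : convex adj Y -> forall x y, d x y = n -> Y x -> Y y -> walk adj Y x y n.
Proof.
move=> CY; elim: n => [|n IH] x y E Yx Yy.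
  by rewrite (d_eq0 E); constructor.
case: (d_step E) => x' [A E'].
have Yx' : Y x'.
  apply: (Ival_Y CY Yx Yy); rewrite /Ival (d_adj A); lia.
econstructor; eauto.
Qed.

Lemma dle_iff (Y : V -> Prop) x y n : convex adj Y -> Y x -> Y y -> (dle adj Y x y n <-> d x y <= n).
Proof.
move=> CY Yx Yy; split.
  case=> m [Hm Hw]; have := d_le (walk_mono (Q := @allV V) (fun _ _ => I) Hw); lia.
move=> H; exists (d x y); split => //; exact: walkY.
Qed.


Lemma cut_dual (Y : V -> Prop) a b : convex adj Y -> Y a -> Y b -> adj a b ->
  forall n u v, d u a = n -> Y u -> Y v -> adj u v -> W a b u -> W b a v ->
  dual adj Y (a, b) (u, v).
Proof.
move=> CY Ya Yb A; elim=> [|n IH] u v E Yu Yv Auv Wu Wv.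
  have eu := d_eq0 E; subst u.
  have ev : v = b.
    apply: NNPP => N; apply: (two_nbr A Wu Wv (W_aab (adj_sym A)) Auv A N).
  subst v; split; [by split|exact: rst_refl].
have [c1 c2] := cut_arith A Auv Wu Wv.
have gu := W_succ A Wu.
case: (d_step E) => u' [Au Eu'].
have [l1 l2] := d_adj_lip b Au.
have [l3 l4] := d_adj_lip a Au.
have gu' : d u' b = n.+1 by case: (W_or u' A); lia.
have duv : d u' v = 2.
  have := d_tri u' u v; rewrite (d_adj (adj_sym Au)) (d_adj Auv) => h.
  have := d_tri v u' a; ds u' v; lia.
case: (med_ex u' v b) => w [i1 [i2 i3]].
move: i1 i2 i3; rewrite /Ival duv => i1 i2 i3.
have w1 : d u' w = 1 by ds v w; ds w b; ds u' b; ds v b; lia.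
have w2 : d w v = 1 by lia.
have gw : d w b = n by ds v w; ds v b; lia.
have [l5 l6] := d_adj_lip a (d_one w2).
have fw : d w a = n.+1 by case: (W_or w A); lia.
have Yu' : Y u' by apply: (Ival_Y CY Yu Ya); rewrite /Ival (d_adj Au); lia.
have Yw : Y w by apply: (Ival_Y CY Yv Yb); rewrite /Ival; ds v w; ds v b; lia.
have Wu' : W a b u' by rewrite /W; lia.
have Ww : W b a w by rewrite /W; lia.
have D := IH u' w Eu' Yu' Yw (d_one w1) Wu' Ww.
case: D => He R; split => //.
apply: rst_trans R _; apply: rst_sym; apply: rst_step.
apply: par_sq => //.
- exact: d_one w1.
- by apply: adj_sym; apply: d_one.
- by move=> ?; subst w; lia.
- by move=> ?; subst v; lia.
Qed.

Lemma cut_dual' (Y : V -> Prop) a b u v : convex adj Y -> Y a -> Y b -> adj a b ->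
  Y u -> Y v -> adj u v -> Cut a b u v -> dual adj Y (a, b) (u, v).
Proof.
move=> CY Ya Yb A Yu Yv Auv [[Wu Wv]|[Wu Wv]].
  exact: (cut_dual CY Ya Yb A (erefl _)).
apply: dual_flip; apply: (cut_dual CY Ya Yb A (erefl _)) => //.
exact: adj_sym.
Qed.

Lemma wa_Y (Y : V -> Prop) e x y : walk_avoid adj Y e x y -> Y x /\ Y y.
Proof. by elim=> // x0 y0 z0 Yx _ _ _ [_ Yz]. Qed.

Lemma half_W (Y : V -> Prop) a b s x : convex adj Y -> Y a -> Y b -> adj a b ->
  walk_avoid adj Y (a, b) s x -> (W a b s -> W a b x) /\ (W b a s -> W b a x).
Proof.
move=> CY Ya Yb A; elim=> // x0 y0 z0 Yx Axy ND Hw [IH1 IH2].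
have [Yy _] := wa_Y Hw.
split => Wx.
  apply: IH1; case: (W_part y0 A) => // Wy; exfalso; apply: ND.
  by apply: (cut_dual' CY Ya Yb A Yx Yy Axy); left.
apply: IH2; case: (W_part y0 (adj_sym A)) => // Wy; exfalso; apply: ND.
by apply: (cut_dual' CY Ya Yb A Yx Yy Axy); right.
Qed.

Lemma IvalW a b x w : adj a b -> W a b x -> Ival x a w -> W a b w.
Proof.
move=> A Wx I; have := W_succ A Wx; move: I; rewrite /Ival /W => I h.
have := d_tri x w b; ds x w; ds w a; lia.
Qed.

Section Conv.
Variables (a b : V).
Hypothesis A : adj a b.
Variable n : nat.
Hypothesis IH : forall n', n' < n -> forall x y z, d x y = n' -> W a b x -> W a b y ->
  Ival x y z -> W a b z.

Lemma conv_step1 x y z : d x y = n -> W a b x -> W a b y -> Ival x y z -> ~ W a b z ->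
  exists z1, adj x z1 /\ ~ W a b z1 /\ Ival x y z1.
Proof.
move=> E Wx Wy I Nz.
case Ez: (d x z) => [|s].
  by case: Nz; rewrite -(d_eq0 Ez).
case: (d_step Ez) => x1 [Ax Ex1].
have Ix1 : Ival x y x1.
  move: I; rewrite /Ival (d_adj Ax) => I.
  have := d_tri x1 z y; have := d_tri x x1 y; rewrite (d_adj Ax); lia.
case: (classic (W a b x1)) => W1; last by exists x1.
exfalso; apply: Nz; apply: (IH (n' := d x1 y)) W1 Wy _ => //.
  move: Ix1; rewrite /Ival (d_adj Ax); lia.
move: I Ix1; rewrite /Ival (d_adj Ax); lia.
Qed.

Lemma conv_step2 x y m z1 : d x y = n -> W a b x -> W a b y -> W a b m ->
  Ival x y m -> m <> x -> m <> y ->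
  adj x z1 -> ~ W a b z1 -> Ival x y z1 -> d m y = 1.
Proof.
move=> E Wx Wy Wm Im Nx Ny Az N1 I1.
have hy : 0 < d m y by case H: (d m y) => //; case: Ny; exact: d_eq0.
have hx : 0 < d x m by case H: (d x m) => //; case: Nx; rewrite (d_eq0 H).
have dz := d_adj Az.
case: (med_ex x z1 m) => u [u1 [u2 u3]].
have Wu : W a b u.
  apply: (IH (n' := d x m)) Wx Wm u3 => //; move: Im; rewrite /Ival; lia.
have eu : u = x.
  case: (Ival_edge Az u1) => // eu; subst u; tauto.
subst u.
case: (med_ex y z1 m) => v [v1 [v2 v3]].
have Wv : W a b v.
  apply: (IH (n' := d y m)) Wy Wm v3 => //; move: Im; rewrite /Ival; ds m y; lia.
have Ixv : Ival x v z1.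
  move: I1 v1 Im; rewrite /Ival => I1 v1 Im.
  have := d_tri x z1 v; have := d_tri x v y; ds y v; ds v z1; ds z1 y; lia.
have ev : d x v = n.
  apply: NNPP => H.
  have : d x v < n.
    move: Ixv; rewrite /Ival; move: I1 v1; rewrite /Ival => I1 v1.
    ds y v; ds v z1; ds z1 y; lia.
  move=> lt; apply: N1; exact: (IH lt (erefl _) Wx Wv Ixv).
have vy : v = y.
  apply: d_eq0; move: Ixv v1 I1; rewrite /Ival => Ixv v1 I1.
  ds y v; ds v z1; ds z1 y; ds v y; lia.
subst v.
move: u2 v2 Im I1; rewrite /Ival => u2 v2 Im I1.
ds z1 x; ds y z1; ds m y; lia.
Qed.

Lemma conv_case x y z : d x y = n -> W a b x -> W a b y -> Ival x y z -> W a b z.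
Proof.
move=> E Wx Wy I; apply: NNPP => Nz.
case: (conv_step1 E Wx Wy I Nz) => z1 [A1 [N1 I1]].
have E' : d y x = n by rewrite d_sym.
have I' : Ival y x z by move: I; rewrite /Ival; ds x z; ds z y; ds x y; lia.
case: (conv_step1 E' Wy Wx I' Nz) => z2 [A2 [N2 I2]].
have I2' : Ival x y z2 by move: I2; rewrite /Ival; ds x z2; ds z2 y; ds x y; lia.
case: (med_ex x y a) => m [m1 [m2 m3]].
have Wm : W a b m by apply: (IvalW A Wx m3).
have gx := W_succ A Wx; have gy := W_succ A Wy.
have dz1 := d_adj A1; have dz2 := d_adj A2.
case: (classic (m = x)) => Mx.
  subst m; apply: N1; rewrite /W.
  move: m2 I1; rewrite /Ival => m2 I1.
  have := d_tri y z1 b; have := d_tri z1 x a; ds x z1; ds y z1; ds y x; ds z1 y; lia.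
case: (classic (m = y)) => My.
  subst m; apply: N2; rewrite /W.
  move: m3 I2'; rewrite /Ival => m3 I2'.
  have := d_tri x z2 b; have := d_tri z2 y a; ds y z2; ds x z2; ds z2 y; ds x y; lia.
have h1 := conv_step2 E Wx Wy Wm m1 Mx My A1 N1 I1.
have m1' : Ival y x m by move: m1; rewrite /Ival; ds x m; ds m y; ds x y; lia.
have h2 := conv_step2 E' Wy Wx Wm m1' My Mx A2 N2 I2.
have Wz1 : W b a z1 by case: (W_part z1 A).
have [c1 c2] := cut_arith A A1 Wx Wz1.
have gm := W_succ A Wm.
have U := @med_uniq x y b z1 m.
have : z1 = m.
  move: I1 m1 m2 m3; rewrite /Ival => I1 m1 m2 m3.
  apply: U; rewrite /Ival; ds x z1; ds z1 y; ds y z1; ds x m; ds m y; ds y m; ds x y; ds m x; lia.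
by move=> ?; subst m.
Qed.

End Conv.

Lemma W_conv a b x y z : adj a b -> W a b x -> W a b y -> Ival x y z -> W a b z.
Proof.
move=> A.
have key : forall N n, n <= N -> forall x y z, d x y = n -> W a b x -> W a b y ->
    Ival x y z -> W a b z.
  elim=> [|N IHN] n Hn.
    apply: (conv_case A (n := n)) => n' lt; lia.
  apply: (conv_case A (n := n)) => n' lt; apply: (IHN n'); lia.
by move=> Wx Wy I; apply: (key _ _ (leqnn _) x y z (erefl _)).
Qed.

End Dist.


Lemma arith1 (k Mv R1 D W0 X i : Z) : (1 <= k -> 0 <= R1 -> 0 <= D -> 0 <= W0 ->
  2 * R1 + D * W0 + D + 1 <= Mv -> k * Mv <= i -> i <= 2 * R1 + X -> X <= D * (W0 + k) -> False)%Z.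
Proof.
intros.
assert (k * Mv >= k * (2 * R1 + D * W0 + D + 1))%Z by (apply Z.le_ge, Z.mul_le_mono_nonneg_l; lia).
assert (k * R1 >= R1)%Z by nia.
assert (k * (D * W0) >= D * W0)%Z by nia.
assert (D * (W0 + k) = D * W0 + D * k)%Z by ring.
assert (k * (2 * R1 + D * W0 + D + 1) = 2 * (k * R1) + k * (D * W0) + D * k + k)%Z by ring.
lia.
Qed.

Section Coarse.
Variables (V : Type) (adj : V -> V -> Prop).
Hypothesis Hmed : median_graph adj.
Hypothesis Hlf : locally_finite adj.
Variables (Y : V -> Prop) (phi psi : V -> V).
Hypothesis CY : convex adj Y.
Hypothesis Aphi : forall x y, adj x y <-> adj (phi x) (phi y).
Hypothesis can1 : cancel phi psi.
Hypothesis can2 : cancel psi phi.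
Hypothesis Yphi : forall x, Y x <-> Y (phi x).

Notation dd := (d adj).

Lemma Apsi x y : adj x y <-> adj (psi x) (psi y).
Proof. by rewrite (Aphi (psi x)) !can2. Qed.
Lemma Ypsi x : Y x <-> Y (psi x).
Proof. by rewrite (Yphi (psi x)) can2. Qed.

Definition T (m : Z) (x : V) : V :=
  if (0 <=? m)%Z then iter (Z.to_nat m) phi x else iter (Z.to_nat (- m)) psi x.

Lemma T_phi j x : phi (T j x) = T (j + 1) x.
Proof.
rewrite /T; case: (Z.leb_spec 0 j) => H.
  have -> : (0 <=? j + 1)%Z = true by apply/Z.leb_le; lia.
  by rewrite Z2Nat.inj_add //= Nat.add_1_r.
case: (Z.leb_spec 0 (j + 1)) => H'.
  have -> : (j + 1 = 0)%Z by lia.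
  have -> : Z.to_nat (- j) = 1%N by lia.
  by rewrite /= can2.
have -> : Z.to_nat (- j) = (Z.to_nat (- (j + 1))).+1 by lia.
by rewrite iterS can2.
Qed.

Lemma T_psi j x : psi (T j x) = T (j - 1) x.
Proof.
have := T_phi (j - 1) x; have -> : (j - 1 + 1 = j)%Z by lia.
by move=> <-; rewrite can1.
Qed.

Lemma T_iter_phi k j x : iter k phi (T j x) = T (j + Z.of_nat k) x.
Proof.
elim: k => [|k IH] /=; first by f_equal; lia.
by rewrite IH T_phi; f_equal; lia.
Qed.

Lemma T_iter_psi k j x : iter k psi (T j x) = T (j - Z.of_nat k) x.
Proof.
elim: k => [|k IH] /=; first by f_equal; lia.
by rewrite IH T_psi; f_equal; lia.
Qed.

Lemma T0 x : T 0 x = x.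
Proof. by []. Qed.

Lemma T_add m j x : T m (T j x) = T (j + m) x.
Proof.
rewrite {1}/T; case: (Z.leb_spec 0 m) => H.
  by rewrite T_iter_phi; f_equal; lia.
by rewrite T_iter_psi; f_equal; lia.
Qed.

Lemma T_inv m x : T m (T (- m) x) = x.
Proof. by rewrite T_add; have -> : (- m + m = 0)%Z by lia. Qed.

Lemma iter_phi_T k x : iter k phi x = T (Z.of_nat k) x.
Proof. by rewrite -{1}(T0 x) T_iter_phi. Qed.
Lemma iter_psi_T k x : iter k psi x = T (- Z.of_nat k) x.
Proof. by rewrite -{1}(T0 x) T_iter_psi; f_equal; lia. Qed.

Lemma T_adj m x y : adj x y <-> adj (T m x) (T m y).
Proof.
rewrite /T; case: (0 <=? m)%Z; elim: (Z.to_nat _) => //= n IH.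
  by rewrite -Aphi.
by rewrite -Apsi.
Qed.

Lemma T_Y m x : Y x <-> Y (T m x).
Proof.
rewrite /T; case: (0 <=? m)%Z; elim: (Z.to_nat _) => //= n IH.
  by rewrite -Yphi.
by rewrite -Ypsi.
Qed.

Lemma d_map (g : V -> V) x y : (forall u v, adj u v -> adj (g u) (g v)) -> dd (g x) (g y) <= dd x y.
Proof.
move=> Hg; apply: (d_le Hmed).
have : walk adj (@allV V) x y (dd x y) := d_walk Hmed x y.
elim=> [u _|u v w n _ Auv _ IH]; first by apply: walk0; exact: I.
apply: (walkS (y := g v)) => //; exact: Hg.
Qed.

Lemma T_d m x y : dd (T m x) (T m y) = dd x y.
Proof.
have h1 := @d_map (T m) x y (fun u v => proj1 (T_adj m u v)).
have h2 := @d_map (T (- m)) (T m x) (T m y) (fun u v => proj1 (T_adj (- m) u v)).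
have e : forall z, T (- m) (T m z) = z.
  by move=> z; rewrite T_add; have -> : (m + - m = 0)%Z by lia.
rewrite !e in h2; apply/eqP; rewrite eqn_leq h1 h2.
done.
Qed.

Variables (F : list V) (z0 : V).
Hypothesis Fcov : forall y, Y y -> exists z k, In z F /\ (y = iter k phi z \/ y = iter k psi z).
Hypothesis FY : forall z, In z F -> Y z.
Hypothesis z0F : In z0 F.

Definition P (j : Z) := T j z0.
Definition R := foldr (fun z r => maxn (dd z z0) r) 0%N F.
Definition R1 := R.+1.
Definition D := dd z0 (phi z0).

Lemma R_ge z : In z F -> dd z z0 <= R.
Proof.
rewrite /R; elim: F => //= z1 l IH [->|H].
  exact: leq_maxl.
apply: leq_trans (IH H) _; exact: leq_maxr.
Qed.

Lemma Y_P j : Y (P j).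
Proof. rewrite /P -T_Y; exact: FY. Qed.

Lemma T_P m j : T m (P j) = P (j + m).
Proof. by rewrite /P T_add. Qed.

Lemma cover y : Y y -> exists j, dd y (P j) <= R.
Proof.
move=> Yy; case: (Fcov Yy) => z [k [Hz [->|->]]].
  exists (Z.of_nat k); rewrite iter_phi_T /P T_d; exact: R_ge.
exists (- Z.of_nat k)%Z; rewrite iter_psi_T /P T_d; exact: R_ge.
Qed.

Lemma dP_step j : dd (P j) (P (j + 1)) = D.
Proof.
have e : P (j + 1) = T j (phi z0).
  by rewrite -[in phi z0](T0 z0) T_phi T_add /P; f_equal; lia.
by rewrite e /P T_d.
Qed.

Lemma dP_nat i n : dd (P i) (P (i + Z.of_nat n)) <= D * n.
Proof.
elim: n => [|n IH].
  by rewrite Z.add_0_r d_refl.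
have := d_tri Hmed (P i) (P (i + Z.of_nat n)) (P (i + Z.of_nat n.+1)).
have -> : (i + Z.of_nat n.+1 = (i + Z.of_nat n) + 1)%Z by lia.
rewrite dP_step; lia.
Qed.

Lemma dP i j : (Z.of_nat (dd (P i) (P j)) <= Z.of_nat D * Z.abs (j - i))%Z.
Proof.
case: (Z.le_gt_cases i j) => H.
  have := dP_nat i (Z.to_nat (j - i)).
  have -> : (i + Z.of_nat (Z.to_nat (j - i)) = j)%Z by lia.
  move/leP/inj_le; rewrite -multE Nat2Z.inj_mul Z2Nat.id; [|lia].
  have -> : Z.abs (j - i) = (j - i)%Z by lia. done.
have := dP_nat j (Z.to_nat (i - j)).
have -> : (j + Z.of_nat (Z.to_nat (i - j)) = i)%Z by lia.
rewrite (d_sym Hmed).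
move/leP/inj_le; rewrite -multE Nat2Z.inj_mul Z2Nat.id; [|lia].
have -> : Z.abs (j - i) = (i - j)%Z by lia. done.
Qed.


Lemma nbrs (l : list V) : exists N, forall u w, In u l -> adj u w -> In w N.
Proof.
elim: l => [|x l [N HN]]; first by exists nil.
case: (Hlf x) => Nx HNx; exists (Nx ++ N) => u w [<-|Hu] A; apply/in_or_app.
  by left; apply: HNx.
by right; apply: HN Hu A.
Qed.

Lemma ball v L : exists l, forall w, dd v w <= L -> In w l.
Proof.
elim: L => [|L [l Hl]].
  exists (v :: nil) => w H; left; symmetry; apply: (d_eq0 Hmed); rewrite (d_sym Hmed); lia.
case: (nbrs l) => N HN; exists (l ++ N) => w H; apply/in_or_app.
case: (leqP (dd v w) L) => H'; first by left; apply: Hl.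
right; have E : dd w v = L.+1 by rewrite (d_sym Hmed); lia.
case: (d_step Hmed E) => w' [A E']; apply: (HN w') => //.
  by apply: Hl; rewrite (d_sym Hmed) E'.
exact: (adj_sym Hmed).
Qed.

Lemma fin_idx (l : list V) : (forall i j, P i = P j -> i = j) ->
  exists K, forall j, In (P j) l -> (Z.abs j <= K)%Z.
Proof.
move=> Inj; elim: l => [|x l [K HK]]; first by exists 0%Z.
case: (classic (exists j0, P j0 = x)) => [[j0 Hj0]|N].
  exists (Z.max K (Z.abs j0)) => j [E|H].
    rewrite -Hj0 in E; rewrite (Inj _ _ E); lia.
  have := HK _ H; lia.
exists K => j [E|H]; last exact: HK.
by case: N; exists j.
Qed.

Definition proper := forall L, exists K, forall i j, dd (P i) (P j) <= L -> (Z.abs (j - i) <= K)%Z.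

Lemma P_shift i j : dd (P i) (P j) = dd (P 0) (P (j - i)).
Proof.
rewrite -(T_d (- i)) !T_P; f_equal; f_equal; lia.
Qed.

Lemma dichotomy : proper \/ exists Bd, forall y, Y y -> dd y z0 <= Bd.
Proof.
case: (classic (forall i j, P i = P j -> i = j)) => Inj.
  left => L; case: (ball (P 0) L) => l Hl; case: (fin_idx l Inj) => K HK.
  exists K => i j H; apply: HK; apply: Hl; by rewrite -P_shift.
right.
have [i [j [E N]]] : exists i j, P i = P j /\ (i < j)%Z.
  apply: NNPP => H; apply: Inj => i j E; apply: NNPP => N'.
  case: (Z.lt_trichotomy i j) => [lt|[lt|gt]]; first by apply: H; exists i, j.
    by apply: N'.
  by apply: H; exists j, i.
set p := (j - i)%Z.
have per : forall l, P (l + p) = P l.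
  move=> l; have e1 : P (l + p) = T (l - i) (P j) by rewrite T_P; f_equal; rewrite /p; lia.
  have e2 : P l = T (l - i) (P i) by rewrite T_P; f_equal; lia.
  by rewrite e1 e2 E.
have perq : forall (q : nat) l, P (l + p * Z.of_nat q) = P l.
  elim=> [|q IH] l; first by f_equal; lia.
  have -> : (l + p * Z.of_nat q.+1 = (l + p * Z.of_nat q) + p)%Z by lia.
  by rewrite per IH.
have red : forall l, P l = P (l mod p).
  move=> l; have Hp : (p <> 0)%Z by rewrite /p; lia.
  have Hd := Z.div_mod l p Hp.
  case: (Z.le_gt_cases 0 (l / p)%Z) => Hq.
    rewrite {1}Hd -(perq (Z.to_nat (l / p)%Z) (l mod p)%Z); f_equal; rewrite Z2Nat.id; lia.
  rewrite -(perq (Z.to_nat (- (l / p))%Z) l); f_equal; rewrite Z2Nat.id; lia.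
exists (R + D * Z.to_nat p)%N => y Yy.
case: (cover Yy) => l Hl.
have := d_tri Hmed y (P l) z0.
have h : (Z.of_nat (dd (P l) z0) <= Z.of_nat D * Z.abs (l mod p)%Z)%Z.
  rewrite red (d_sym Hmed) -{1}(T0 z0) -/(P 0); have := dP (i:=0) (j:=(l mod p)%Z).
  by have -> : ((l mod p)%Z - 0 = (l mod p)%Z)%Z by lia.
have B : (0 <= (l mod p)%Z < p)%Z by apply: Z.mod_pos_bound; rewrite /p; lia.
move=> t.
have h2 : (Z.of_nat D * Z.abs (l mod p)%Z <= Z.of_nat D * p)%Z by apply: Z.mul_le_mono_nonneg_l; lia.
have h3 : Z.of_nat (D * Z.to_nat p) = (Z.of_nat D * p)%Z.
  by rewrite -multE Nat2Z.inj_mul Z2Nat.id //; lia.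
lia.
Qed.


Notation WW := (W adj).

Definition Cc a b w := exists p q, Y p /\ Y q /\ adj p q /\ WW a b p /\ WW b a q /\ (w = p \/ w = q).
Definition EE a b := forall r : nat,
  (exists x, Y x /\ WW a b x /\ forall w, Cc a b w -> r < dd x w) /\
  (exists x, Y x /\ WW b a x /\ forall w, Cc a b w -> r < dd x w).
Definition idx v j := dd v (P j) <= R1.
Definition CI a b j := exists w, Cc a b w /\ idx w j.
Definition Claim a b (W0 : Z) := exists S1 S2 : V -> Prop,
  ((S1 = WW a b /\ S2 = WW b a) \/ (S1 = WW b a /\ S2 = WW a b)) /\
  exists lo hi : Z, (hi - lo <= W0)%Z /\ forall v j, Y v -> idx v j ->
     ((j <= lo)%Z -> S1 v) /\ ((hi <= j)%Z -> S2 v).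

Lemma idx_ex v : Y v -> exists j, idx v j.
Proof. by move=> Yv; case: (cover Yv) => j h; exists j; rewrite /idx /R1; lia. Qed.

Lemma dvia x y j j' : idx x j -> idx y j' ->
  (Z.of_nat (dd x y) <= 2 * Z.of_nat R1 + Z.of_nat D * Z.abs (j - j'))%Z.
Proof.
rewrite /idx => h1 h2.
have t1 := d_tri Hmed x (P j) y; have t2 := d_tri Hmed (P j) (P j') y.
have := dP (i := j) (j := j'); rewrite (d_sym Hmed y (P j')) in h2.
have -> : Z.abs (j' - j) = Z.abs (j - j') by lia.
lia.
Qed.

Lemma W_disj a b x : WW a b x -> WW b a x -> False.
Proof. rewrite /W; lia. Qed.

Lemma D_pos : proper -> 0 < D.
Proof.
move=> Hp; case: (Hp 0) => K HK; case E: D => [|n] //.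
have := HK 0%Z (K + 1)%Z; rewrite P_shift.
have := dP (i := 0) (j := (K + 1 - 0)%Z); rewrite E /=.
move=> h; have h' : dd (P 0) (P (K + 1 - 0)) = 0 by lia.
rewrite h' => /(_ (leqnn 0)); lia.
Qed.

Section Edge.
Variables (a b : V).
Hypotheses (Ya : Y a) (Yb : Y b) (A : adj a b).

Lemma Cc_Y w : Cc a b w -> Y w.
Proof. by case=> p [q [Yp [Yq [_ [_ [_ [->|->]]]]]]]. Qed.

Lemma Cc_a : Cc a b a.
Proof.
exists a, b; do 3 (split => //); split; first exact: W_aab.
by split; [exact: (W_aab Hmed (adj_sym Hmed A))|left].
Qed.

Lemma Cc_edge u v : Y u -> Y v -> adj u v -> Cut adj a b u v -> Cc a b u /\ Cc a b v.
Proof.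
move=> Yu Yv Auv [[Wu Wv]|[Wu Wv]].
  by split; exists u, v; (split; [done|split; [done|split; [done|split; [done|split; [done|]]]]]); [left|right].
by split; exists v, u; (split; [done|split; [done|split; [exact: (adj_sym Hmed Auv)|split; [done|split; [done|]]]]]); [right|left].
Qed.

Lemma walk_ext Q x u u' n : walk adj Q x u n -> Q u' -> adj u u' -> walk adj Q x u' n.+1.
Proof.
move=> Hw Q' Au; rewrite -addn1; apply: (walk_app Hw).
apply: walk1 => //; by case: (walk_ends Hw).
Qed.

Lemma reach w : Cc a b w -> exists n, walk adj (Cc a b) a w n.
Proof.
have key : forall f, clos_refl_sym_trans_n1 _ (elem_par adj Y) (a, b) f ->
   (exists n, walk adj (Cc a b) a f.1 n) /\ (exists n, walk adj (Cc a b) a f.2 n).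
  move=> f; elim => [|y z Hyz Hc [[n1 H1] [n2 H2]]].
    split; first by exists 0%N; constructor; exact: Cc_a.
    exists 1%N; apply: walk1 => //; first exact: Cc_a.
    by case: (Cc_edge Ya Yb A (or_introl (conj (W_aab Hmed A) (W_aab Hmed (adj_sym Hmed A))))).
  have Dz : dual adj Y (a, b) z.
    split; first by split.
    apply: clos_rstn1_rst; apply: rstn1_trans Hyz Hc.
  have [Yz1 Yz2 Az] := dual_edge Hmed Dz.
  have Cz : Cut adj a b z.1 z.2 by case: z Dz {Hyz Yz1 Yz2 Az} => z1 z2 Dz; exact: (dual_cut Hmed Dz).
  have [C1 C2] := Cc_edge Yz1 Yz2 Az Cz.
  clear Dz Cz Yz1 Yz2 Az; move: C1 C2 H1 H2 Hyz Hc.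
  case: y => y1 y2; case: z => z1 z2 /= C1 C2 H1 H2 Hyz Hc.
  case: Hyz => E; inversion E; subst.
  - by split; [exists n1.+1; exact: walk_ext H1 C1 _|exists n2.+1; exact: walk_ext H2 C2 _].
  - by split; [exists n2|exists n1].
  - split; [exists n1.+1; apply: walk_ext H1 C1 _|exists n2.+1; apply: walk_ext H2 C2 _]; exact: adj_sym.
  - by split; [exists n2|exists n1].
case=> p [q [Yp [Yq [Apq [Wp [Wq Hw]]]]]].
have Dpq := cut_dual Hmed CY Ya Yb A (erefl _) Yp Yq Apq Wp Wq.
have [[n1 H1] [n2 H2]] := key _ (clos_rst_rstn1 _ _ _ _ (proj2 Dpq)).
by case: Hw => ->; [exists n1|exists n2].
Qed.

Lemma idxPP x y j j' L : idx x j -> idx y j' -> dd x y <= L -> dd (P j) (P j') <= R1 + L + R1.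
Proof.
rewrite /idx => h1 h2 h3.
have := d_tri Hmed (P j) x (P j'); have := d_tri Hmed x y (P j').
rewrite (d_sym Hmed (P j) x); lia.
Qed.

Lemma fill K (HK : forall i j, dd (P i) (P j) <= (R1 + 1 + R1) -> (Z.abs (j - i) <= K)%Z) :
  forall n u w, walk adj (Cc a b) u w n -> forall ju jw, idx u ju -> idx w jw ->
  forall j, (Z.min ju jw <= j <= Z.max ju jw)%Z -> exists j', CI a b j' /\ (Z.abs (j - j') <= K)%Z.
Proof.
move=> n u w; elim=> [u0 Cu|u0 u1 w0 n0 Cu Au Hw IH] ju jw hu hw j hj.
  have hP : dd (P ju) (P jw) <= R1 + 1 + R1 by have := idxPP hu hw (eq_leq (d_refl Hmed u0)); lia.
  have h := HK _ _ hP.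
  exists ju; split; [by exists u0|lia].
have [C1 _] := walk_ends Hw.
case: (idx_ex (Cc_Y C1)) => ju1 h1.
have h := HK _ _ (idxPP hu h1 (eq_leq (d_adj Hmed Au))).
case: (Z.le_gt_cases (Z.min ju ju1) j) => c1; case: (Z.le_gt_cases j (Z.max ju ju1)) => c2.
- exists ju; split; [by exists u0|lia].
- apply: (IH ju1 jw h1 hw j); lia.
- apply: (IH ju1 jw h1 hw j); lia.
- lia.
Qed.

Lemma nocross n : forall u u', dd u u' = n -> Y u -> Y u' ->
  (forall w, Ival adj u u' w -> ~ Cc a b w) -> (WW a b u <-> WW a b u').
Proof.
elim: n => [|n IH] u u' E Yu Yu' H.
  by rewrite (d_eq0 Hmed E).
case: (d_step Hmed E) => u1 [Au E1].
have I1 : Ival adj u u' u1 by rewrite /Ival (d_adj Hmed Au) E1 E.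
have Yu1 : Y u1 := Ival_Y Hmed CY Yu Yu' I1.
have Nu : ~ Cc a b u by apply: H; rewrite /Ival d_refl.
have Nu1 : ~ Cc a b u1 by apply: H.
have e : WW a b u <-> WW a b u1.
  split => Wu.
    case: (W_part Hmed u1 A) => // Wu1; case: Nu.
    by case: (Cc_edge Yu Yu1 Au (or_introl (conj Wu Wu1))).
  case: (W_part Hmed u A) => // Wu'; case: Nu.
  by case: (Cc_edge Yu Yu1 Au (or_intror (conj Wu' Wu))).
rewrite e; apply: IH => // w Iw; apply: H.
move: Iw; rewrite /Ival => Iw.
have := d_tri Hmed u u1 w; rewrite (d_adj Hmed Au) => t.
have := d_tri Hmed u w u'; lia.
Qed.

Lemma window K (HK : forall i j, dd (P i) (P j) <= R1 + D + R1 -> (Z.abs (j - i) <= K)%Z) lo hi :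
  (forall j, CI a b j -> (j < lo - K \/ hi + K < j)%Z) ->
  forall x jx, Y x -> idx x jx -> (lo <= jx <= hi)%Z -> (WW a b x <-> WW a b (P lo)).
Proof.
move=> Hw x jx Yx hx hj.
have K0 : (0 <= K)%Z by have := HK 0%Z 0%Z; rewrite (d_refl Hmed) => /(_ isT); lia.
have e1 : WW a b x <-> WW a b (P jx).
  apply: (nocross (erefl _) Yx (Y_P _)) => w Iw Cw.
  have : CI a b jx.
    exists w; split => //; move: Iw hx; rewrite /Ival /idx; lia.
  move/Hw; lia.
have steps : forall t : nat, (lo + Z.of_nat t <= hi)%Z -> (WW a b (P lo) <-> WW a b (P (lo + Z.of_nat t))).
  elim=> [|t IHt] ht; first by rewrite Z.add_0_r.
  rewrite IHt; last lia.
  have -> : (lo + Z.of_nat t.+1 = (lo + Z.of_nat t) + 1)%Z by lia.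
  apply: (nocross (erefl _) (Y_P _) (Y_P _)) => w Iw Cw.
  case: (idx_ex (Cc_Y Cw)) => j'' h''.
  have hd : dd (P (lo + Z.of_nat t)) w <= D by move: Iw; rewrite /Ival dP_step; lia.
  have hPj : idx (P (lo + Z.of_nat t)) (lo + Z.of_nat t) by rewrite /idx (d_refl Hmed).
  have := HK _ _ (idxPP hPj h'' hd).
  have : CI a b j'' by exists w.
  move/Hw; lia.
rewrite e1; have := steps (Z.to_nat (jx - lo)).
rewrite Z2Nat.id; last lia.
have -> : (lo + (jx - lo) = jx)%Z by lia.
move=> h; symmetry; apply: h; lia.
Qed.

Lemma claim_edge : proper -> EE a b -> exists W0, Claim a b W0.
Proof.
move=> Hp He.
have D1 := D_pos Hp.
case: (Hp (R1 + 1 + R1)) => K1 HK1.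
case: (Hp (R1 + D + R1)) => K' HK'.
have K10 : (0 <= K1)%Z by have := HK1 0%Z 0%Z; rewrite (d_refl Hmed) => /(_ isT); lia.
have K'0 : (0 <= K')%Z by have := HK' 0%Z 0%Z; rewrite (d_refl Hmed) => /(_ isT); lia.
case: (idx_ex Ya) => ja hja.
have CIa : CI a b ja by exists a; split; [exact: Cc_a|].
have nb : forall j1 j2 j, CI a b j1 -> CI a b j2 -> (j1 <= j <= j2)%Z ->
    exists j', CI a b j' /\ (Z.abs (j - j') <= K1)%Z.
  move=> j1 j2 j [w1 [C1 h1]] [w2 [C2 h2]] hj.
  case: (reach C1) => n1 W1; case: (reach C2) => n2 W2.
  case: (Z.le_gt_cases j ja) => c.
    apply: (fill HK1 W1 hja h1); lia.
  apply: (fill HK1 W2 hja h2); lia.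
have farpt : forall M, (0 <= M)%Z -> forall x j, idx x j ->
    (forall w, Cc a b w -> Z.to_nat (2 * Z.of_nat R1 + Z.of_nat D * K1 + Z.of_nat D * M) < dd x w) ->
    (forall j', CI a b j' -> (K1 < Z.abs (j - j'))%Z) /\ (K1 + M < Z.abs (j - ja))%Z.
  move=> M M0 x j hx Hf; split.
    move=> j' [w [Cw hw]]; have := Hf w Cw; have := dvia hx hw.
    move=> h1 h2; apply: NNPP => N.
    have : (Z.of_nat D * Z.abs (j - j') <= Z.of_nat D * K1)%Z by apply: Z.mul_le_mono_nonneg_l; lia.
    nia.
  have := Hf a Cc_a; have := dvia hx hja => h1 h2.
  nia.
have getpts : forall M, (0 <= M)%Z -> exists x1 j1 x2 j2, Y x1 /\ WW a b x1 /\ idx x1 j1 /\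
    Y x2 /\ WW b a x2 /\ idx x2 j2 /\
    (forall j', CI a b j' -> (K1 < Z.abs (j1 - j'))%Z) /\ (K1 + M < Z.abs (j1 - ja))%Z /\
    (forall j', CI a b j' -> (K1 < Z.abs (j2 - j'))%Z) /\ (K1 + M < Z.abs (j2 - ja))%Z.
  move=> M M0; case: (He (Z.to_nat (2 * Z.of_nat R1 + Z.of_nat D * K1 + Z.of_nat D * M))).
  move=> [x1 [Y1 [W1 F1]]] [x2 [Y2 [W2 F2]]].
  case: (idx_ex Y1) => j1 h1; case: (idx_ex Y2) => j2 h2.
  have [f1 g1] := farpt M M0 x1 j1 h1 F1.
  have [f2 g2] := farpt M M0 x2 j2 h2 F2.
  by exists x1, j1, x2, j2; do 9 (split => //).
case: (classic (forall be, exists j, CI a b j /\ (be < j)%Z)) => UA;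
  case: (classic (forall al, exists j, CI a b j /\ (j < al)%Z)) => UB.
- exfalso.
  case: (getpts 0%Z (Z.le_refl _)) => x1 [j1 [x2 [j2 [_ [_ [_ [_ [_ [_ [f1 _]]]]]]]]]].
  case: (UA j1) => jb [Cb hb]; case: (UB j1) => jl [Cl hl].
  case: (nb jl jb j1 Cl Cb (conj (Z.lt_le_incl _ _ hl) (Z.lt_le_incl _ _ hb))) => j' [C' h'].
  have := f1 j' C'; lia.
- exfalso.
  have [al Hal] : exists al, forall j, CI a b j -> (al <= j)%Z.
    apply: NNPP => N; apply: UB => al; apply: NNPP => N2; apply: N; exists al => j Cj.
    apply: NNPP => N3; apply: N2; exists j; split => //; lia.
  have ha := Hal _ CIa.
  case: (getpts (ja - al + K' + 1)%Z ltac:(lia)) => x1 [j1 [x2 [j2 [Y1 [W1 [h1 [Y2 [W2 [h2 [f1 [g1 [f2 g2]]]]]]]]]]]].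
  have left : forall j, (forall j', CI a b j' -> (K1 < Z.abs (j - j'))%Z) -> (j < ja)%Z.
    move=> j f; apply: NNPP => N.
    case: (UA j) => jb [Cb hb].
    case: (nb ja jb j CIa Cb ltac:(lia)) => j' [C' h']; have := f j' C'; lia.
  have l1 := left j1 f1; have l2 := left j2 f2.
  have Hw : forall j, CI a b j -> (j < Z.min j1 j2 - K' \/ Z.max j1 j2 + K' < j)%Z.
    move=> j Cj; have := Hal j Cj; lia.
  have e1 := window HK' Hw Y1 h1 ltac:(lia).
  have e2 := window HK' Hw Y2 h2 ltac:(lia).
  apply: (W_disj W2); by apply/e2/e1.
- exfalso.
  have [be Hbe] : exists be, forall j, CI a b j -> (j <= be)%Z.
    apply: NNPP => N; apply: UA => be; apply: NNPP => N2; apply: N; exists be => j Cj.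
    apply: NNPP => N3; apply: N2; exists j; split => //; lia.
  have hb := Hbe _ CIa.
  case: (getpts (be - ja + K' + 1)%Z ltac:(lia)) => x1 [j1 [x2 [j2 [Y1 [W1 [h1 [Y2 [W2 [h2 [f1 [g1 [f2 g2]]]]]]]]]]]].
  have right : forall j, (forall j', CI a b j' -> (K1 < Z.abs (j - j'))%Z) -> (ja < j)%Z.
    move=> j f; apply: NNPP => N.
    case: (UB j) => jl [Cl hl].
    case: (nb jl ja j Cl CIa ltac:(lia)) => j' [C' h']; have := f j' C'; lia.
  have l1 := right j1 f1; have l2 := right j2 f2.
  have Hw : forall j, CI a b j -> (j < Z.min j1 j2 - K' \/ Z.max j1 j2 + K' < j)%Z.
    move=> j Cj; have := Hbe j Cj; lia.
  have e1 := window HK' Hw Y1 h1 ltac:(lia).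
  have e2 := window HK' Hw Y2 h2 ltac:(lia).
  apply: (W_disj W2); by apply/e2/e1.
- have [al Hal] : exists al, forall j, CI a b j -> (al <= j)%Z.
    apply: NNPP => N; apply: UB => al; apply: NNPP => N2; apply: N; exists al => j Cj.
    apply: NNPP => N3; apply: N2; exists j; split => //; lia.
  have [be Hbe] : exists be, forall j, CI a b j -> (j <= be)%Z.
    apply: NNPP => N; apply: UA => be; apply: NNPP => N2; apply: N; exists be => j Cj.
    apply: NNPP => N3; apply: N2; exists j; split => //; lia.
  have ha := Hal _ CIa; have hb := Hbe _ CIa.
  set lo := (al - K' - 1)%Z; set hi := (be + K' + 1)%Z.
  have hPlo : idx (P lo) lo by rewrite /idx (d_refl Hmed).
  have hPhi : idx (P hi) hi by rewrite /idx (d_refl Hmed).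
  have L : forall v j, Y v -> idx v j -> (j <= lo)%Z -> (WW a b v <-> WW a b (P lo)).
    move=> v j Yv hv hj.
    have Hw : forall j', CI a b j' -> (j' < j - K' \/ lo + K' < j')%Z.
      move=> j' C'; have := Hal j' C'; rewrite /lo; lia.
    rewrite (window HK' Hw Yv hv ltac:(lia)).
    symmetry; exact: (window HK' Hw (Y_P lo) hPlo ltac:(lia)).
  have Rr : forall v j, Y v -> idx v j -> (hi <= j)%Z -> (WW a b v <-> WW a b (P hi)).
    move=> v j Yv hv hj.
    have Hw : forall j', CI a b j' -> (j' < hi - K' \/ j + K' < j')%Z.
      move=> j' C'; have := Hbe j' C'; rewrite /hi; lia.
    exact: (window HK' Hw Yv hv ltac:(lia)).
  case: (getpts (hi - lo)%Z ltac:(rewrite /hi /lo; lia)) => x1 [j1 [x2 [j2 [Y1 [W1 [h1 [Y2 [W2 [h2 [f1 [g1 [f2 g2]]]]]]]]]]]].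
  have s1 : (WW a b x1 <-> WW a b (P lo)) \/ (WW a b x1 <-> WW a b (P hi)).
    case: (Z.le_gt_cases j1 lo) => c; first by left; exact: (L _ _ Y1 h1 c).
    right; apply: (Rr _ _ Y1 h1); rewrite /hi /lo in c g1 *; lia.
  have s2 : (WW a b x2 <-> WW a b (P lo)) \/ (WW a b x2 <-> WW a b (P hi)).
    case: (Z.le_gt_cases j2 lo) => c; first by left; exact: (L _ _ Y2 h2 c).
    right; apply: (Rr _ _ Y2 h2); rewrite /hi /lo in c g2 *; lia.
  have nx2 : ~ WW a b x2 by move=> H; exact: (W_disj H W2).
  exists (hi - lo)%Z.
  case: (classic (WW a b (P lo))) => Wlo.
    have Nhi : ~ WW a b (P hi).
      move=> Whi; apply: nx2; case: s2 => ->; done.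
    exists (WW a b), (WW b a); split; first by left.
    exists lo, hi; split; first lia.
    move=> v j Yv hv; split => hj; first by apply/(L _ _ Yv hv hj).
    case: (W_part Hmed v A) => // Wv; case: Nhi; exact: (proj1 (Rr _ _ Yv hv hj) Wv).
  have Whi : WW a b (P hi) by case: s1 => h; [exfalso; apply: Wlo; exact: (proj1 h W1)|exact: (proj1 h W1)].
  exists (WW b a), (WW a b); split; first by right.
  exists lo, hi; split; first lia.
  move=> v j Yv hv; split => hj; last by apply/(Rr _ _ Yv hv hj).
  case: (W_part Hmed v A) => // Wv; case: Wlo; exact: (proj1 (L _ _ Yv hv hj) Wv).
Qed.

End Edge.

Lemma W_T m a b v : WW (T m a) (T m b) (T m v) = WW a b v.
Proof. by rewrite /W !T_d. Qed.

Lemma Cc_T m a b w : Cc a b w -> Cc (T m a) (T m b) (T m w).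
Proof.
case=> p [q [Yp [Yq [Apq [Wp [Wq Hw]]]]]].
exists (T m p), (T m q); split; first by rewrite -T_Y.
split; first by rewrite -T_Y.
split; first by rewrite -T_adj.
rewrite !W_T; do 2 (split => //).
by case: Hw => ->; [left|right].
Qed.

Lemma idx_T m v j : idx v j -> idx (T m v) (j + m).
Proof. by rewrite /idx -T_P T_d. Qed.

Lemma EE_T m a b : EE (T m a) (T m b) -> EE a b.
Proof.
move=> H r; case: (H r) => [[x1 [Y1 [W1 F1]]] [x2 [Y2 [W2 F2]]]].
have e : forall x, x = T m (T (- m) x) by move=> x; rewrite T_inv.
split.
  exists (T (- m) x1); split; first by rewrite -T_Y.
  split; first by rewrite -(W_T m) -e.
  by move=> w Cw; have := F1 _ (Cc_T m Cw); rewrite {1}(e x1) T_d.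
exists (T (- m) x2); split; first by rewrite -T_Y.
split; first by rewrite -(W_T m) -e.
by move=> w Cw; have := F2 _ (Cc_T m Cw); rewrite {1}(e x2) T_d.
Qed.

Lemma Claim_T m a b W0 : Claim a b W0 -> Claim (T m a) (T m b) W0.
Proof.
case=> S1 [S2 [HS [lo [hi [Hw H]]]]].
have e : forall x, x = T m (T (- m) x) by move=> x; rewrite T_inv.
have key : forall a' b' v, WW a' b' (T (- m) v) -> WW (T m a') (T m b') v.
  by move=> a' b' v; rewrite {2}(e v) W_T.
case: HS => [[E1 E2]|[E1 E2]]; subst S1 S2.
- exists (WW (T m a) (T m b)), (WW (T m b) (T m a)); split; first by left.
  exists (lo + m)%Z, (hi + m)%Z; split; first lia.
  move=> v j Yv hv; have hv' := idx_T (- m) hv.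
  have Yv' : Y (T (- m) v) by rewrite -T_Y.
  have [h1 h2] := H _ _ Yv' hv'.
  split => hj; apply: key; [apply: h1|apply: h2]; lia.
- exists (WW (T m b) (T m a)), (WW (T m a) (T m b)); split; first by right.
  exists (lo + m)%Z, (hi + m)%Z; split; first lia.
  move=> v j Yv hv; have hv' := idx_T (- m) hv.
  have Yv' : Y (T (- m) v) by rewrite -T_Y.
  have [h1 h2] := H _ _ Yv' hv'.
  split => hj; apply: key; [apply: h1|apply: h2]; lia.
Qed.

Lemma Claim_mono a b W0 W1 : (W0 <= W1)%Z -> Claim a b W0 -> Claim a b W1.
Proof.
move=> le [S1 [S2 [HS [lo [hi [Hw H]]]]]]; exists S1, S2; split => //.
exists lo, hi; split => //; lia.
Qed.

Lemma reps : exists E : list (V * V), forall z w, In z F -> adj z w -> In (z, w) E.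
Proof.
elim: F => [|x l [E HE]]; first by exists nil.
case: (Hlf x) => Nx HNx.
exists (map (fun w => (x, w)) Nx ++ E) => z w [<-|Hz] A; apply/in_or_app.
  by left; apply: in_map; apply: HNx.
by right; apply: HE.
Qed.

Lemma edge_rep (E : list (V * V)) (HE : forall z w, In z F -> adj z w -> In (z, w) E) a b :
  Y a -> adj a b -> exists m e, In e E /\ a = T m e.1 /\ b = T m e.2.
Proof.
move=> Ya A.
have [m [z [Hz ea]]] : exists m z, In z F /\ a = T m z.
  case: (Fcov Ya) => z [k [Hz [->|->]]].
    by exists (Z.of_nat k), z; rewrite iter_phi_T.
  by exists (- Z.of_nat k)%Z, z; rewrite iter_psi_T.
subst a; exists m, (z, T (- m) b); split; last by split => //; rewrite T_inv.
apply: HE => //; rewrite (T_adj m) T_inv; exact: A.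
Qed.

Lemma uniform : exists W0, (0 <= W0)%Z /\ forall a b, Y a -> Y b -> adj a b -> EE a b -> Claim a b W0.
Proof.
case: dichotomy => [Hp|[Bd HB]]; last first.
  exists 0%Z; split => // a b Ya Yb A He; exfalso.
  case: (He (Bd + Bd)) => [[x [Yx [_ Fx]]] _].
  have := Fx a (Cc_a Ya Yb A).
  have := d_tri Hmed x z0 a; have := HB _ Yx; have := HB _ Ya.
  rewrite (d_sym Hmed a z0); lia.
case: reps => E HE.
have [W0 [W00 HW]] : exists W0, (0 <= W0)%Z /\ forall e, In e E -> Y e.1 -> Y e.2 -> adj e.1 e.2 ->
    EE e.1 e.2 -> Claim e.1 e.2 W0.
  elim: E {HE} => [|e E [W0 [W00 HW]]]; first by exists 0%Z.
  case: (classic (Y e.1 /\ Y e.2 /\ adj e.1 e.2 /\ EE e.1 e.2)) => [[Y1 [Y2 [A He]]]|N].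
    case: (claim_edge Y1 Y2 A Hp He) => W1 H1.
    exists (Z.max W0 W1); split; first lia.
    move=> e' [<-|H'] Y1' Y2' A' He'.
      apply: Claim_mono H1; lia.
    apply: Claim_mono (HW _ H' Y1' Y2' A' He'); lia.
  exists W0; split => // e' [<-|H'] Y1' Y2' A' He'.
    by case: N.
  exact: HW.
exists W0; split => // a b Ya Yb A He.
case: (edge_rep HE Ya A) => m [e [He' [ea eb]]].
have Y1 : Y e.1 by rewrite (T_Y m) -ea.
have Y2 : Y e.2 by rewrite (T_Y m) -eb.
have A' : adj e.1 e.2 by rewrite (T_adj m) -ea -eb.
have He2 : EE e.1 e.2 by apply: (EE_T (m := m)); rewrite -ea -eb.
rewrite ea eb; apply: Claim_T; exact: HW.
Qed.


Definition geoG (g : nat -> V) n := (forall l, l <= n -> Y (g l)) /\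
  (forall l, l < n -> adj (g l) (g l.+1)) /\ dd (g 0) (g n) = n.

Lemma geo_walk (g : nat -> V) n : (forall l, l < n -> adj (g l) (g l.+1)) ->
  forall l t, l + t <= n -> dd (g l) (g (l + t)) <= t.
Proof.
move=> Ha l; elim=> [|t IH] H; first by rewrite addn0 (d_refl Hmed).
have := d_tri Hmed (g l) (g (l + t)) (g (l + t.+1)).
rewrite addnS (d_adj Hmed (Ha _ _)); [|lia].
have := IH ltac:(lia); lia.
Qed.

Lemma geo_d g n : geoG g n -> forall l l', l <= l' -> l' <= n -> dd (g l) (g l') = l' - l.
Proof.
case=> [_ [Ha E]] l l' h1 h2.
have w1 := geo_walk Ha (l := 0) (t := l) ltac:(lia).
have w2 := geo_walk Ha (l := l) (t := l' - l) ltac:(lia).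
have w3 := geo_walk Ha (l := l') (t := n - l') ltac:(lia).
rewrite add0n in w1; rewrite subnKC in w2 => //; rewrite subnKC in w3 => //.
have := d_tri Hmed (g 0) (g l) (g n); have := d_tri Hmed (g l) (g l') (g n); lia.
Qed.

Lemma geo_rev g n : geoG g n -> geoG (fun l => g (n - l)) n.
Proof.
case=> [HY [Ha E]]; split; [|split].
- move=> l _; apply: HY; lia.
- move=> l hl; apply: (adj_sym Hmed).
  have -> : n - l = (n - l.+1).+1 by lia.
  apply: Ha; lia.
- by rewrite subn0 subnn (d_sym Hmed).
Qed.

Lemma IVT (Q : V -> Prop) (g : nat -> V) n : Q (g 0) -> ~ Q (g n) ->
  exists l, l < n /\ Q (g l) /\ ~ Q (g l.+1).
Proof.
elim: n => [|n IH] Q0 Qn; first by case: Qn.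
case: (classic (Q (g n))) => H.
  by exists n.
case: (IH Q0 H) => l [hl Hl]; exists l; split => //; lia.
Qed.

Lemma Cut_ab a b u v : Cut adj a b u v <-> Cut adj b a u v.
Proof. rewrite /Cut; tauto. Qed.

Lemma core2 W0 a' b' (lo hi : Z) g n i k Mv (s : Z) :
  Y a' -> Y b' -> adj a' b' -> (0 <= W0)%Z -> (hi - lo <= W0)%Z ->
  (forall v j, Y v -> idx v j -> ((j <= lo)%Z -> WW a' b' v) /\ ((hi <= j)%Z -> WW b' a' v)) ->
  geoG g n -> i < n -> WW a' b' (g i) -> WW b' a' (g i.+1) ->
  Z.abs s = Z.of_nat k -> 0 < k ->
  (2 * Z.of_nat R1 + Z.of_nat D * W0 + Z.of_nat D + 1 <= Z.of_nat Mv)%Z ->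
  k * Mv <= i -> k * Mv <= n - i.+1 ->
  exists l, l < n /\ Cut adj (T s a') (T s b') (g l) (g l.+1).
Proof.
move=> Ya Yb A W00 Hw H G hi' Wi Wi1 hs k0 HM h1 h2.
have A' := adj_sym Hmed A.
have hin : i <= n := ltnW hi'.
have [GY [Ga GE]] := G.
have d0i := geo_d G (leq0n i) hin.
have d0i1 := geo_d G (leq0n i.+1) hi'.
have dii1 := geo_d G (leqnSn i) hi'.
have din := geo_d G hin (leqnn n).
have di1n := geo_d G hi' (leqnn n).
rewrite subn0 in d0i d0i1.
have W0g : WW a' b' (g 0).
  case: (W_part Hmed (g 0) A) => // Wg; exfalso.
  apply: (W_disj Wi); apply: (W_conv Hmed A' Wg Wi1).
  rewrite /Ival d0i d0i1 dii1; clear -hi'; lia.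
have Wng : WW b' a' (g n).
  case: (W_part Hmed (g n) A) => // Wg; exfalso.
  apply: (W_disj _ Wi1); apply: (W_conv Hmed A Wi Wg).
  rewrite /Ival din di1n dii1; clear -hi'; lia.
have Yi := GY i hin; have Yi1 := GY i.+1 hi'; have Y0 := GY 0 (leq0n n); have Yn := GY n (leqnn n).
case: (cover Yi) => ji hji.
have ii : idx (g i) ji by rewrite /idx /R1; apply: leq_trans hji (leqnSn _).
have ii1 : idx (g i.+1) ji.
  rewrite /idx /R1; have := d_tri Hmed (g i.+1) (g i) (P ji).
  rewrite (d_sym Hmed (g i.+1) (g i)) dii1 => t; apply: leq_trans t _.
  by rewrite subSnn add1n ltnS.
have [a1 a2] := H _ _ Yi ii.
have [b1 b2] := H _ _ Yi1 ii1.
have lji : (lo < ji)%Z.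
  apply: NNPP => N; apply: (W_disj (b1 (proj1 (Z.nlt_ge _ _) N)) Wi1).
have jih : (ji < hi)%Z.
  apply: NNPP => N; apply: (W_disj Wi (a2 (proj1 (Z.nlt_ge _ _) N))).
case: (idx_ex Y0) => j0 h0.
case: (idx_ex Yn) => jn hn.
have [c1 c2] := H _ _ Y0 h0.
have [e1 e2] := H _ _ Yn hn.
have j0h : (j0 < hi)%Z by apply: NNPP => N; apply: (W_disj W0g (c2 (proj1 (Z.nlt_ge _ _) N))).
have ljn : (lo < jn)%Z by apply: NNPP => N; apply: (W_disj (e1 (proj1 (Z.nlt_ge _ _) N)) Wng).
have D0 : (0 <= Z.of_nat D)%Z := Zle_0_nat _.
have R0 : (0 <= Z.of_nat R1)%Z := Zle_0_nat _.
have v1 := dvia h0 ii; have v2 := dvia ii hn.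
rewrite d0i in v1; rewrite din in v2.
have hk : (1 <= Z.of_nat k)%Z by clear -k0; lia.
have hMk : (Z.of_nat k * Z.of_nat Mv <= Z.of_nat i)%Z.
  by rewrite -Nat2Z.inj_mul; apply: inj_le; apply/leP; rewrite multE.
have hMk2 : (Z.of_nat k * Z.of_nat Mv + 1 <= Z.of_nat (n - i))%Z.
  have : k * Mv + 1 <= n - i by clear -h2 hi'; lia.
  move/leP/inj_le; rewrite Nat2Z.inj_add -Nat2Z.inj_mul multE //.
have L0 : (j0 + Z.of_nat k <= lo)%Z.
  apply: NNPP => N.
  have ab : (Z.abs (j0 - ji) <= W0 + Z.of_nat k)%Z by clear -N lji jih j0h Hw; lia.
  have hX : (Z.of_nat D * Z.abs (j0 - ji) <= Z.of_nat D * (W0 + Z.of_nat k))%Z.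
    by apply: Z.mul_le_mono_nonneg_l.
  exact: (arith1 hk R0 D0 W00 HM hMk v1 hX).
have Ln : (hi <= jn - Z.of_nat k)%Z.
  apply: NNPP => N.
  have ab : (Z.abs (ji - jn) <= W0 + Z.of_nat k)%Z by clear -N lji jih ljn Hw; lia.
  have hX : (Z.of_nat D * Z.abs (ji - jn) <= Z.of_nat D * (W0 + Z.of_nat k))%Z.
    by apply: Z.mul_le_mono_nonneg_l.
  have u1 : (Z.of_nat k * Z.of_nat Mv <= Z.of_nat (n - i) - 1)%Z by clear -hMk2; lia.
  have u2 : (Z.of_nat (n - i) - 1 <= 2 * Z.of_nat R1 + Z.of_nat D * Z.abs (ji - jn))%Z by clear -v2; lia.
  exact: (arith1 hk R0 D0 W00 HM u1 u2 hX).
have Q0 : WW (T s a') (T s b') (g 0).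
  have t0 := idx_T (- s) h0.
  have := H _ _ (proj1 (T_Y (- s) _) Y0) t0; case=> q1 _.
  have := q1 ltac:(clear -L0 hs; lia); by rewrite -(W_T s) T_inv.
have Qn : WW (T s b') (T s a') (g n).
  have tn := idx_T (- s) hn.
  have := H _ _ (proj1 (T_Y (- s) _) Yn) tn; case=> _ q2.
  have := q2 ltac:(clear -Ln hs; lia); by rewrite -(W_T s) T_inv.
have nQn : ~ WW (T s a') (T s b') (g n) by move=> Q; exact: (W_disj Q Qn).
case: (IVT (Q := fun v => is_true (WW (T s a') (T s b') v)) Q0 nQn) => l [hl [Ql nQl]].
exists l; split => //; left; split => //.
case: (W_part Hmed (g l.+1) (proj1 (T_adj s _ _) A)) => // /nQl [].
Qed.


Lemma arith2 (k R1 D W0 X : Z) : (1 <= k -> 0 <= R1 -> 0 <= D -> 0 <= W0 ->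
  X <= D * (W0 + k) -> 2 * R1 + X <= k * (2 * R1 + D * W0 + D))%Z.
Proof.
move=> *.
have h1 : (k * R1 >= R1)%Z by nia.
have h2 : (k * (D * W0) >= D * W0)%Z by nia.
have e1 : (D * (W0 + k) = D * W0 + D * k)%Z by ring.
have e2 : (k * (2 * R1 + D * W0 + D) = 2 * (k * R1) + k * (D * W0) + D * k)%Z by ring.
lia.
Qed.

Lemma part1 W0 a b k (s : Z) : (0 <= W0)%Z -> Claim a b W0 -> Z.abs s = Z.of_nat k -> 0 < k ->
  forall x y, Y x -> Y y -> WW a b x -> WW a b y -> WW b a (T (- s) x) -> WW b a (T (- s) y) ->
  (Z.of_nat (dd x y) <= Z.of_nat k * (2 * Z.of_nat R1 + Z.of_nat D * W0 + Z.of_nat D))%Z.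
Proof.
move=> W00 [S1 [S2 [HS [lo [hi [Hw H]]]]]] hs k0 x y Yx Yy Wx Wy Wx' Wy'.
case: (idx_ex Yx) => jx hx; case: (idx_ex Yy) => jy hy.
have hx' := idx_T (- s) hx; have hy' := idx_T (- s) hy.
have Yx' : Y (T (- s) x) by rewrite -T_Y.
have Yy' : Y (T (- s) y) by rewrite -T_Y.
have [p1 p2] := H _ _ Yx hx; have [p3 p4] := H _ _ Yy hy.
have [p5 p6] := H _ _ Yx' hx'; have [p7 p8] := H _ _ Yy' hy'.
have ab : (Z.abs (jx - jy) <= W0 + Z.of_nat k)%Z.
  case: HS => [[E1 E2]|[E1 E2]]; subst S1 S2.
  - have c1 : (jx < hi)%Z by apply: NNPP => N; apply: (W_disj Wx (p2 (proj1 (Z.nlt_ge _ _) N))).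
    have c2 : (jy < hi)%Z by apply: NNPP => N; apply: (W_disj Wy (p4 (proj1 (Z.nlt_ge _ _) N))).
    have c3 : (lo < jx + - s)%Z by apply: NNPP => N; apply: (W_disj (p5 (proj1 (Z.nlt_ge _ _) N)) Wx').
    have c4 : (lo < jy + - s)%Z by apply: NNPP => N; apply: (W_disj (p7 (proj1 (Z.nlt_ge _ _) N)) Wy').
    clear -c1 c2 c3 c4 hs Hw; lia.
  - have c1 : (lo < jx)%Z by apply: NNPP => N; apply: (W_disj Wx (p1 (proj1 (Z.nlt_ge _ _) N))).
    have c2 : (lo < jy)%Z by apply: NNPP => N; apply: (W_disj Wy (p3 (proj1 (Z.nlt_ge _ _) N))).
    have c3 : (jx + - s < hi)%Z by apply: NNPP => N; apply: (W_disj (p6 (proj1 (Z.nlt_ge _ _) N)) Wx').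
    have c4 : (jy + - s < hi)%Z by apply: NNPP => N; apply: (W_disj (p8 (proj1 (Z.nlt_ge _ _) N)) Wy').
    clear -c1 c2 c3 c4 hs Hw; lia.
have v := dvia hx hy.
have hX : (Z.of_nat D * Z.abs (jx - jy) <= Z.of_nat D * (W0 + Z.of_nat k))%Z.
  by apply: Z.mul_le_mono_nonneg_l => //; apply: Zle_0_nat.
have := arith2 (_ : (1 <= Z.of_nat k)%Z) (Zle_0_nat R1) (Zle_0_nat D) W00 hX.
move=> h; apply: Z.le_trans v (h _); clear -k0; lia.
Qed.

Lemma part2 W0 a b g n i k Mv (s : Z) :
  Y a -> Y b -> adj a b -> (0 <= W0)%Z -> Claim a b W0 ->
  geoG g n -> i < n -> Cut adj a b (g i) (g i.+1) ->
  Z.abs s = Z.of_nat k -> 0 < k ->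
  (2 * Z.of_nat R1 + Z.of_nat D * W0 + Z.of_nat D + 1 <= Z.of_nat Mv)%Z ->
  k * Mv <= i -> k * Mv <= n - i.+1 ->
  exists l, l < n /\ Cut adj (T s a) (T s b) (g l) (g l.+1).
Proof.
move=> Ya Yb A W00 [S1 [S2 [HS [lo [hi [Hw H]]]]]] G hi' Hc hs k0 HM h1 h2.
have A' := adj_sym Hmed A.
pose g' := fun l => g (n - l).
have G' : geoG g' n := geo_rev G.
set i' := n - i.+1.
have hi'' : i' < n by rewrite /i'; clear -hi'; lia.
have e1 : g' i' = g i.+1 by rewrite /g' /i'; f_equal; clear -hi'; lia.
have e2 : g' i'.+1 = g i by rewrite /g' /i'; f_equal; clear -hi'; lia.
have h1' : k * Mv <= i' by [].
have h2' : k * Mv <= n - i'.+1 by rewrite /i'; clear -h1 hi'; lia.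
have back : forall a' b', (exists l, l < n /\ Cut adj a' b' (g' l) (g' l.+1)) ->
    exists l, l < n /\ Cut adj a' b' (g l) (g l.+1).
  move=> a' b' [l [hl Hl]]; exists (n - l.+1); split; first by clear -hl; lia.
  apply/Cut_sym; move: Hl; rewrite /g'.
  have -> : n - l = (n - l.+1).+1 by clear -hl; lia.
  done.
case: HS => [[E1 E2]|[E1 E2]]; subst S1 S2; case: Hc => [[Wi Wi1]|[Wi Wi1]].
- exact: (core2 Ya Yb A W00 Hw H G hi' Wi Wi1 hs k0 HM h1 h2).
- apply: back; rewrite -e1 -e2 in Wi Wi1.
  exact: (core2 Ya Yb A W00 Hw H G' hi'' Wi1 Wi hs k0 HM h1' h2').
- apply: back; rewrite -e1 -e2 in Wi Wi1.
  have [l [hl Hl]] := core2 Yb Ya A' W00 Hw H G' hi'' Wi1 Wi hs k0 HM h1' h2'.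
  by exists l; split => //; apply/Cut_ab.
- have [l [hl Hl]] := core2 Yb Ya A' W00 Hw H G hi' Wi Wi1 hs k0 HM h1 h2.
  by exists l; split => //; apply/Cut_ab.
Qed.

End Coarse.


Lemma ess_EE (V : Type) (adj : V -> V -> Prop) (Y : V -> Prop) a b :
  median_graph adj -> convex adj Y -> Y a -> Y b -> adj a b -> essential adj Y a b -> EE adj Y a b.
Proof.
move=> Hmed CY Ya Yb A [Da Db] r.
have far : forall s x, walk_avoid adj Y (a, b) s x ->
    (forall f, dual adj Y (a, b) f -> ~ dle adj Y x f.1 r /\ ~ dle adj Y x f.2 r) ->
    forall w, Cc adj Y a b w -> r < d adj x w.
  move=> s x Hx Hf w [p [q [Yp [Yq [Apq [Wp [Wq Hw]]]]]]].
  have Dpq := cut_dual Hmed CY Ya Yb A (erefl _) Yp Yq Apq Wp Wq.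
  have [_ Yx] := wa_Y Hx.
  have [n1 n2] := Hf _ Dpq.
  case: Hw => -> /=; rewrite ltnNge; apply/negP => H.
    by apply: n1; apply: (proj2 (dle_iff Hmed r CY Yx Yp)).
  by apply: n2; apply: (proj2 (dle_iff Hmed r CY Yx Yq)).
split.
  case: (Da r) => x [Hx Hf]; exists x; split; first by case: (wa_Y Hx).
  split; last exact: far Hx Hf.
  by apply: (proj1 (half_W Hmed CY Ya Yb A Hx)); apply: W_aab.
case: (Db r) => x [Hx Hf]; exists x; split; first by case: (wa_Y Hx).
split; last exact: far Hx Hf.
by apply: (proj2 (half_W Hmed CY Ya Yb A Hx)); apply: (W_aab Hmed (adj_sym Hmed A)).
Qed.

Lemma geo_geoG (V : Type) (adj : V -> V -> Prop) (Y : V -> Prop) g n :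
  median_graph adj -> convex adj Y -> geodesic adj Y g n -> geoG adj Y g n.
Proof.
move=> Hmed CY [HY [Ha [Hw Hm]]]; do 2 (split => //).
have Y0 := HY 0 (leq0n n); have Yn := HY n (leqnn n).
have h1 := d_le Hmed (walk_mono (Q := @allV V) (fun _ _ => I) Hw).
have h2 := Hm _ (walkY Hmed CY (erefl _) Y0 Yn).
by apply/eqP; rewrite eqn_leq h1 h2.
Qed.

Theorem lemma5p7 (V : Type) (adj : V -> V -> Prop) (G : (V -> V) -> Prop)
  (HX : compact_npc_cover adj G)
  (Y : V -> Prop) (phi psi : V -> V)
  (HQ : quasiline adj G Y phi psi) :
  exists N M : nat, forall Nb Mb : nat, N <= Nb -> M <= Mb ->
  forall k : nat, 0 < k ->
  (* (1) *)
  (forall a b : V, edgeY adj Y (a, b) -> essential adj Y a b ->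
     diam_le adj Y (fun x => halfspace adj Y a b a x /\
                     exists z, halfspace adj Y a b b z /\ x = iter k phi z) (k * Nb) /\
     diam_le adj Y (fun x => halfspace adj Y a b a x /\
                     exists z, halfspace adj Y a b b z /\ x = iter k psi z) (k * Nb)) /\
  (* (2) *)
  (forall (a b : V) (gamma : nat -> V) (n i : nat),
     edgeY adj Y (a, b) -> essential adj Y a b ->
     geodesic adj Y gamma n -> i < n ->
     dual adj Y (a, b) (gamma i, gamma i.+1) ->
     k * Mb <= i -> k * Mb <= n - i.+1 ->
     crosses adj Y (iter k phi a, iter k phi b) gamma n /\
     crosses adj Y (iter k psi a, iter k psi b) gamma n).
Proof.
case: HX => Hmed [Hlf [Haut _]].
case: HQ => [[y0 Yy0] [CY [Gphi [can1 [can2 [_ [Yphi [F [FY Fcov]]]]]]]]].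
have Aphi := proj2 (Haut _ Gphi).
have [z0 z0F] : exists z0, In z0 F.
  by case: (Fcov _ Yy0) => z [k [Hz _]]; exists z.
case: (uniform Hmed Hlf CY Aphi can1 can2 Yphi Fcov FY z0F) => W0 [W00 HU].
set R1' := Z.of_nat (R1 adj F z0); set D' := Z.of_nat (D adj phi z0).
have R0 : (0 <= R1')%Z := Zle_0_nat _.
have D0 : (0 <= D')%Z := Zle_0_nat _.
have DW : (0 <= D' * W0)%Z by apply: Z.mul_nonneg_nonneg.
exists (Z.to_nat (2 * R1' + D' * W0 + D')), (Z.to_nat (2 * R1' + D' * W0 + D' + 1)).
move=> Nb Mb hN hM k k0; split.
- move=> a b [Ya Yb A] Ess.
  have He := ess_EE Hmed CY Ya Yb A Ess.
  have Cl := HU a b Ya Yb A He.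
  have gen : forall s, Z.abs s = Z.of_nat k -> forall x y,
      (halfspace adj Y a b a x /\ exists z, halfspace adj Y a b b z /\ x = T phi psi s z) ->
      (halfspace adj Y a b a y /\ exists z, halfspace adj Y a b b z /\ y = T phi psi s z) ->
      dle adj Y x y (k * Nb).
    move=> s hs x y [Hx [zx [Hzx ex]]] [Hy [zy [Hzy ey]]].
    have [_ Yx] := wa_Y Hx; have [_ Yy] := wa_Y Hy.
    have Wx := proj1 (half_W Hmed CY Ya Yb A Hx) (W_aab Hmed A).
    have Wy := proj1 (half_W Hmed CY Ya Yb A Hy) (W_aab Hmed A).
    have Wzx := proj2 (half_W Hmed CY Ya Yb A Hzx) (W_aab Hmed (adj_sym Hmed A)).
    have Wzy := proj2 (half_W Hmed CY Ya Yb A Hzy) (W_aab Hmed (adj_sym Hmed A)).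
    have ix : T phi psi (- s) x = zx.
      by rewrite ex -{2}(Z.opp_involutive s) T_inv.
    have iy : T phi psi (- s) y = zy.
      by rewrite ey -{2}(Z.opp_involutive s) T_inv.
    rewrite -ix in Wzx; rewrite -iy in Wzy.
    have := part1 Hmed Aphi can1 can2 Yphi Fcov W00 Cl hs k0 Yx Yy Wx Wy Wzx Wzy.
    rewrite -/R1' -/D' => h.
    apply/(dle_iff Hmed _ CY Yx Yy).
    have : (Z.of_nat k * (2 * R1' + D' * W0 + D') <= Z.of_nat (k * Nb))%Z.
      rewrite -multE Nat2Z.inj_mul; apply: Z.mul_le_mono_nonneg_l; first lia.
      have := inj_le _ _ (elimT leP hN); rewrite Z2Nat.id //; lia.
    move=> h'; apply/leP; apply/Nat2Z.inj_le; lia.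
  split => x y Hx Hy.
  + apply: (gen (Z.of_nat k)) => //; first lia.
      by case: Hx => h [z [hz e]]; split => //; exists z; rewrite e (iter_phi_T can2).
    by case: Hy => h [z [hz e]]; split => //; exists z; rewrite e (iter_phi_T can2).
  + apply: (gen (- Z.of_nat k)%Z) => //; first lia.
      by case: Hx => h [z [hz e]]; split => //; exists z; rewrite e (iter_psi_T can1 can2).
    by case: Hy => h [z [hz e]]; split => //; exists z; rewrite e (iter_psi_T can1 can2).
- move=> a b g n i [Ya Yb A] Ess Geo hi Du h1 h2.
  have He := ess_EE Hmed CY Ya Yb A Ess.
  have Cl := HU a b Ya Yb A He.
  have GG := geo_geoG Hmed CY Geo.
  have Cu := dual_cut Hmed Du.
  set M := Z.to_nat (2 * R1' + D' * W0 + D' + 1).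
  have HM : (2 * R1' + D' * W0 + D' + 1 <= Z.of_nat M)%Z by rewrite /M Z2Nat.id; lia.
  have h1' : k * M <= i by apply: leq_trans h1; rewrite leq_mul2l hM orbT.
  have h2' : k * M <= n - i.+1 by apply: leq_trans h2; rewrite leq_mul2l hM orbT.
  have gen : forall s, Z.abs s = Z.of_nat k ->
      crosses adj Y (T phi psi s a, T phi psi s b) g n.
    move=> s hs.
    case: (part2 Hmed Aphi can1 can2 Yphi Fcov Ya Yb A W00 Cl GG hi Cu hs k0 HM h1' h2') => l [hl Hl].
    exists l; split => //.
    have [GY [Ga _]] := GG.
    apply: (cut_dual' Hmed CY) => //.
    + by rewrite -T_Y.
    + by rewrite -T_Y.
    + by rewrite -T_adj.
    + by apply: GY; apply: ltnW.
    + by apply: GY.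
    + by apply: Ga.
  rewrite !(iter_phi_T can2) !(iter_psi_T can1 can2); split; apply: gen; lia.
Qed.
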